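(* Let $d\geq 3$ and let $P$ be the standard pattern of $Q_d$. Then any ordering of the vertices of $P$ as a sequence $(v_1,\ldots,v_m)$ is an $L$-sequence, i.e., for each $i$ there is $u_i\in N[v_i]$ with $u_i\notin N(v_j)$ for all $j<i$.
   Context: $Q_d$ is the $d$-dimensional hypercube: vertices are the $0$-$1$ strings of length $d$, two strings adjacent iff they differ in exactly one position. $N(v)$ is the open neighborhood, $N[v]=N(v)\cup\{v\}$. Partition $Q_d$ into $2^{d-3}$ subcubes, each consisting of the 8 strings sharing a fixed prefix $*\in\{0,1\}^{d-3}$ in the first $d-3$ positions. Pattern A of a subcube with prefix $*$ is $\{*000,*011,*101,*110\}$ and Pattern B is $\{*001,*010,*100,*111\}$. The cube distance between two subcubes is the Hamming distance between their prefixes. Let $Q_1$ denote the subcube with prefix $0^{d-3}$. The standard pattern is the set consisting of the Pattern A vertices of all subcubes at even cube distance from $Q_1$ together with the Pattern B vertices of all subcubes at odd cube distance from $Q_1$. *)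

(* Defs.v *)
From mathcomp Require Import all_boot.
Set Implicit Arguments. Unset Strict Implicit. Unset Printing Implicit Defensive.

Definition vertex (d : nat) := {ffun 'I_d -> bool}.

Definition adj d (u v : vertex d) : bool := #|[set i : 'I_d | u i != v i]| == 1.

Definition open_nbhd d (v : vertex d) : {set vertex d} := [set u | adj v u].
Definition closed_nbhd d (v : vertex d) : {set vertex d} := v |: open_nbhd v.

Definition bitn d (v : vertex d) (k : nat) : bool :=
  [exists i : 'I_d, (val i == k) && v i].

(* the last three bits of v (positions d-2, d-1, d in 1-based numbering) *)
Definition last3 d (v : vertex d) : bool * bool * bool :=
  (bitn v (d - 3), bitn v (d - 2), bitn v (d - 1)).

(* v lies in Pattern A (resp. B) of its own subcube *)
Definition in_patternA d (v : vertex d) : bool :=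
  last3 v \in [:: (false, false, false); (false, true, true);
                 (true, false, true); (true, true, false)].
Definition in_patternB d (v : vertex d) : bool :=
  last3 v \in [:: (false, false, true); (false, true, false);
                 (true, false, false); (true, true, true)].

(* cube distance between the subcubes containing u and v:
   Hamming distance of the prefixes (first d-3 positions) *)
Definition cube_dist d (u v : vertex d) : nat :=
  #|[set i : 'I_d | (val i < d - 3) && (u i != v i)]|.

(* cube distance from the subcube of v to Q_1 (prefix 0^{d-3}) *)
Definition dist_to_Q1 d (v : vertex d) : nat :=
  #|[set i : 'I_d | (val i < d - 3) && v i]|.

Definition standard_pattern d : {set vertex d} :=
  [set v | if ~~ odd (dist_to_Q1 v) then in_patternA v else in_patternB v].

Definition L_sequence d (s : seq (vertex d)) : Prop :=
  forall (s1 s2 : seq (vertex d)) (v : vertex d), s = s1 ++ v :: s2 ->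
    exists u, u \in closed_nbhd v /\ (forall w, w \in s1 -> u \notin open_nbhd w).

(* Main.v *)
Require Import Defs.
From mathcomp Require Import all_boot.

Lemma card_sum d (P : pred 'I_d) : #|[set i | P i]| = \sum_(i<d) P i.
Proof.
rewrite -sum1_card big_mkcond /=; apply: eq_bigr => i _; rewrite inE.
by case: (P i).
Qed.

Lemma bitnE d (v : vertex d) (i : 'I_d) k : val i = k -> bitn v k = v i.
Proof.
move=> <-; apply/existsP/idP => [[j /andP[/eqP /val_inj -> //]]|vi].
by exists i; rewrite eqxx.
Qed.

Lemma sp_parity n (v : vertex n.+3) :
  (v \in standard_pattern n.+3) = ~~ odd (\sum_(i<n.+3) v i).
Proof.
rewrite inE /dist_to_Q1 /in_patternA /in_patternB /last3 card_sum.
have -> : n.+3 - 3 = n by rewrite !subSS subn0.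
have -> : n.+3 - 2 = n.+1 by rewrite !subSS subn0.
have -> : n.+3 - 1 = n.+2 by rewrite !subSS subn0.
rewrite !big_ord_recr /=.
rewrite (@bitnE _ v (widen_ord (leqnSn _) (widen_ord (leqnSn _) (@ord_max n)))) //.
rewrite (@bitnE _ v (widen_ord (leqnSn _) (@ord_max n.+1))) //.
rewrite (@bitnE _ v (@ord_max n.+2)) //.
have h1 : (n.+1 < n) = false by rewrite ltnNge ltnW.
have h2 : (n.+2 < n) = false by rewrite ltnNge ltnW // ltnW.
rewrite ltnn h1 h2 /= !addn0.
under eq_bigr => i _ do rewrite ltn_ord /=.
move: (\sum_(i < n) _) => S.
rewrite !oddD.
by case: (v _); case: (v _); case: (v _); case: (odd S).
Qed.

Lemma adj_parity d (w v : vertex d) :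
  adj w v -> odd (\sum_(i<d) v i) != odd (\sum_(i<d) w i).
Proof.
rewrite /adj => /cards1P [j hj].
have hi : forall i, (w i != v i) = (i == j).
  by move=> i; have := congr1 (fun A : {set 'I_d} => i \in A) hj; rewrite /= !inE.
rewrite (bigD1 j) //= [X in _ != odd X](bigD1 j) //=.
have -> : \sum_(i < d | i != j) w i = \sum_(i < d | i != j) v i.
  apply: eq_bigr => i /negbTE hij.
  by move: (hi i); rewrite hij => /negbFE/eqP ->.
have := hi j; rewrite eqxx.
rewrite !oddD; case: (w j); case: (v j) => //= _; by case: (odd _).
Qed.

Theorem mainTheorem8 (d : nat) (hd : 3 <= d) (s : seq (vertex d)) :
  perm_eq s (enum (standard_pattern d)) -> L_sequence s.
Proof.
case: d hd s => [|[|[|n]]] // _ s hperm s1 s2 v hs.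
have inP : forall x, x \in s -> ~~ odd (\sum_(i<n.+3) x i).
  by move=> x; rewrite (perm_mem hperm) mem_enum sp_parity.
exists v; split; first by rewrite /closed_nbhd setU11.
move=> w hw; rewrite /open_nbhd inE; apply/negP => hadj.
have := adj_parity _ _ _ hadj.
rewrite (negbTE (inP v _)); last by rewrite hs mem_cat mem_head orbT.
by rewrite (negbTE (inP w _)) // hs mem_cat hw.
Qed.
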